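(* In the message-passing model (already with $k=2$ sites), without edge duplication, any randomized protocol that decides with error probability at most $1/3$ on every input whether the graph $G$ (with $n$ vertices and $m$ edges) contains a cycle uses $\Omega(\min\{m,n\})$ bits of communication.
   Context: Message-passing model: $k$ sites $P_1,\dots,P_k$, each holding a private input; two-way point-to-point channels between every pair of sites; at the end some site outputs the answer; cost is total bits exchanged. Graph setting: $G=(V,E)$ is an undirected graph with $|V|=n$, $|E|=m$; each site $P_i$ holds a subgraph $G_i\subseteq G$ on the common vertex set, and $G$ is the union of the $G_i$. ''Without edge duplication'' means the edge sets of the $G_i$ are pairwise disjoint. $R^{\delta}(g)$ denotes the minimum, over randomized protocols that on every input output $g$ correctly with probability at least $1-\delta$, of the maximum communication over all inputs and random choices. *)

(* Defs.v *)
From mathcomp Require Import all_boot.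
Set Implicit Arguments. Unset Strict Implicit. Unset Printing Implicit Defensive.

(* Internal nodes: the indicated site sends one bit computed from its own input;
   leaves: the indicated site outputs a bit computed from its own input
   (and, implicitly, the transcript = position in the tree). *)
Inductive proto (X : Type) : Type :=
| OutA (h : X -> bool)
| OutB (h : X -> bool)
| SendA (f : X -> bool) (p0 p1 : proto X)
| SendB (g : X -> bool) (p0 p1 : proto X).

Arguments OutA {X} h.
Arguments OutB {X} h.
Arguments SendA {X} f p0 p1.
Arguments SendB {X} g p0 p1.

Fixpoint pout (X : Type) (p : proto X) (a b : X) : bool :=
  match p with
  | OutA h => h a
  | OutB h => h b
  | SendA f p0 p1 => if f a then pout p1 a b else pout p0 a b
  | SendB g p0 p1 => if g b then pout p1 a b else pout p0 a b
  end.

Fixpoint pcost (X : Type) (p : proto X) (a b : X) : nat :=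
  match p with
  | OutA _ | OutB _ => 0
  | SendA f p0 p1 => (if f a then pcost p1 a b else pcost p0 a b).+1
  | SendB g p0 p1 => (if g b then pcost p1 a b else pcost p0 a b).+1
  end.

Definition edge_set (n : nat) (E : {set {set 'I_n}}) : Prop :=
  forall e, e \in E -> #|e| = 2.

Definition has_cycle (n : nat) (E : {set {set 'I_n}}) : Prop :=
  exists c : seq 'I_n,
    [/\ 2 < size c, uniq c & cycle (fun u v => [set u; v] \in E) c].

(* Valid input for two sites: each holds an edge set, without edge duplication
   (disjoint), and the union graph has (at most) m edges. *)
Definition valid_input (n m : nat) (EA EB : {set {set 'I_n}}) : Prop :=
  [/\ edge_set EA, edge_set EB, [disjoint EA & EB] & #|EA :|: EB| <= m].

Arguments valid_input n m EA EB : clear implicits.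

(* A public-coin randomized protocol: a family of deterministic protocols indexed
   by the uniformly random string r : R. *)
Definition cycle_correct (n m : nat) (R : finType)
    (P : R -> proto {set {set 'I_n}}) : Prop :=
  forall EA EB, valid_input n m EA EB ->
    (has_cycle (EA :|: EB) ->
       3 * #|[set r | ~~ pout (P r) EA EB]| <= #|R|) /\
    (~ has_cycle (EA :|: EB) ->
       3 * #|[set r | pout (P r) EA EB]| <= #|R|).

Arguments cycle_correct n m {R} P.

(* Main.v *)
Require Import Defs.
From mathcomp Require Import all_boot.
From mathcomp Require Import all_order all_algebra zify ring lra.
Set Implicit Arguments. Unset Strict Implicit. Unset Printing Implicit Defensive.
Import Order.TTheory GRing.Theory Num.Theory.
Local Open Scope ring_scope.

Section Disc.
Variable N : nat.
Definition BV := {ffun 'I_N -> bool}.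
Definition ip (x y : BV) : nat := (\sum_(i < N) (x i && y i))%N.
Definition chi (x y : BV) : int := (-1) ^+ ip x y.

Definition flip (i : 'I_N) (x : BV) : BV := [ffun j => if j == i then ~~ x j else x j].

Lemma flipK i : involutive (flip i).
Proof. by move=> x; apply/ffunP=> j; rewrite !ffunE; case: eqP => // _; rewrite negbK. Qed.

Lemma ip_split i x y : ip x y = ((x i && y i) + \sum_(j < N | j != i) (x j && y j))%N.
Proof. by rewrite /ip (bigD1 i). Qed.

Lemma ip_flip i x y : ip (flip i x) y = ((~~ x i && y i) + \sum_(j < N | j != i) (x j && y j))%N.
Proof.
rewrite (ip_split i) ffunE eqxx; congr (_ + _)%N.
by apply: eq_bigr => j /negbTE ji; rewrite ffunE ji.
Qed.

Lemma chi_flip i (y y' x : BV) : y i != y' i ->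
  chi (flip i x) y * chi (flip i x) y' = - (chi x y * chi x y').
Proof.
move=> ne; rewrite /chi -!exprD !(ip_flip i) (ip_split i x y) (ip_split i x y').
set A := (\sum_(j < N | j != i) _)%N; set B := (\sum_(j < N | j != i) _)%N.
move: ne; case: (x i); case: (y i); case: (y' i) => //= _;
by rewrite !add0n ?add1n ?addSn ?addnS exprS mulN1r ?opprK.
Qed.

Lemma card_BV : #|{: BV}| = (2 ^ N)%N.
Proof. by rewrite card_ffun card_bool card_ord. Qed.

Lemma orth y y' : \sum_x chi x y * chi x y' = if y == y' then (2 ^ N)%N%:Z else 0.
Proof.
Abort.
Lemma orth (y y' : BV) : \sum_x chi x y * chi x y' = if y == y' then (2 ^ N)%N%:Z else 0.
Proof.
case: eqP => [<-|/eqP ne].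
  rewrite (eq_bigr (fun _ => 1)); last first.
    by move=> x _; rewrite /chi -exprD addnn -signr_odd odd_double.
  by rewrite sumr_const card_BV natz.
have [i nei] : exists i, y i != y' i.
  case: (boolP [exists i, y i != y' i]) => [/existsP // | /existsPn H].
  move/eqP: ne; case.
  by apply/ffunP => i; apply/eqP; have := H i; rewrite negbK.
set S := \sum_x _.
have : S = - S.
  rewrite {1}/S (reindex_inj (can_inj (flipK i))) /= -sumrN.
  by apply: eq_bigr => x _; rewrite chi_flip.
lia.
Qed.
End Disc.

Section CS.
Variable I : finType.
Definition cnt (P : pred I) : int := \sum_(i | P i) 1.

Lemma CS (P : pred I) (v : I -> int) :
  (\sum_(i | P i) v i) ^+ 2 <= cnt P * \sum_(i | P i) v i ^+ 2.
Proof.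
have H0 : 0 <= \sum_(i | P i) \sum_(j | P j) (v i - v j) ^+ 2.
  by apply: sumr_ge0 => i _; apply: sumr_ge0 => j _; apply: sqr_ge0.
have E : \sum_(i | P i) \sum_(j | P j) (v i - v j) ^+ 2 =
   2 * (cnt P * \sum_(i | P i) v i ^+ 2) - 2 * (\sum_(i | P i) v i) ^+ 2.
  rewrite (eq_bigr (fun i => v i ^+ 2 * cnt P + \sum_(j | P j) v j ^+ 2
        - 2 * v i * \sum_(j | P j) v j)); last first.
    move=> i _; rewrite /cnt mulr_sumr mulr_sumr -big_split -sumrB /=.
    by apply: eq_bigr => j _; rewrite mulr1; ring.
  rewrite sumrB big_split /=.
  have K : forall c : int, \sum_(i | P i) c = cnt P * c.
    by move=> c; rewrite /cnt mulr_suml; apply: eq_bigr => i _; rewrite mul1r.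
  rewrite K -mulr_suml -mulr_suml -mulr_sumr; ring.
rewrite E in H0; lia.
Qed.
End CS.

Section Disc2.
Variable N : nat.
Definition D (S T : pred (BV N)) : int := \sum_(x | S x) \sum_(y | T y) chi x y.

Lemma cnt_ge0 (I : finType) (P : pred I) : 0 <= cnt P.
Proof. by apply: sumr_ge0. Qed.

Lemma cnt_le (P : pred (BV N)) : cnt P <= (2 ^ N)%N%:Z.
Proof.
rewrite /cnt big_mkcond /=.
apply: le_trans (_ : \sum_(x : BV N) 1 <= _).
  by apply: ler_sum => x _; case: (P x).
by rewrite sumr_const card_BV natz.
Qed.

Lemma Dbound S T : D S T ^+ 2 <= (2 ^ N)%N%:Z ^+ 3.
Proof.
set u := fun x => \sum_(y | T y) chi x y.
have h1 := CS S u.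
have h2 : \sum_(x | S x) u x ^+ 2 <= \sum_x u x ^+ 2.
  rewrite [X in _ <= X](bigID S) /= lerDl.
  by apply: sumr_ge0 => x _; apply: sqr_ge0.
have h3 : \sum_x u x ^+ 2 = cnt T * (2 ^ N)%N%:Z.
  rewrite (eq_bigr (fun x => \sum_(y | T y) \sum_(y' | T y') chi x y * chi x y')); last first.
    by move=> x _; rewrite expr2 /u mulr_suml; apply: eq_bigr => y _; rewrite mulr_sumr.
  rewrite exchange_big /= /cnt mulr_suml; apply: eq_bigr => y Ty.
  rewrite exchange_big /=.
  rewrite (eq_bigr (fun y' => if y == y' then (2 ^ N)%N%:Z else 0)); last first.
    by move=> y' _; rewrite orth.
  rewrite (bigD1 y) //= eqxx big1 ?addr0 ?mul1r // => y' /andP [_ ne].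
  by rewrite eq_sym (negbTE ne).
have hS := cnt_le S; have hT := cnt_le T; have hS0 := cnt_ge0 S; have hT0 := cnt_ge0 T.
rewrite /D -/u.
have h4 : cnt S * \sum_(x | S x) u x ^+ 2 <= cnt S * (cnt T * (2 ^ N)%N%:Z).
  by rewrite -h3; apply: ler_wpM2l.
set Z := (2 ^ N)%N%:Z in hS hT h4 *.
apply: le_trans h1 _; apply: le_trans h4 _.
rewrite !exprS expr0 mulr1 mulrA; nia.
Qed.
End Disc2.


Section Corr.
Variable N : nat.
Definition Fv (x y : BV N) := ~~ odd (ip x y).
Definition agr (q : proto (BV N)) x y : int := if pout q x y == Fv x y then 1 else -1.
Definition corr q (S T : pred (BV N)) := \sum_(x | S x) \sum_(y | T y) agr q x y.

Lemma chiE x y : chi x y = if Fv x y then 1 else -1.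
Proof. by rewrite /chi /Fv -signr_odd; case: odd. Qed.

Lemma corr0 q (S T : pred (BV N)) : (forall x y, S x -> T y -> False) -> corr q S T = 0.
Proof.
move=> H; rewrite /corr big1 // => x Sx; rewrite big1 // => y Ty.
by case: (H x y Sx Ty).
Qed.

Variable B : nat.
Hypothesis HB : forall S T : pred (BV N), `|D S T| <= B%:Z.

Lemma corr_bound q : forall (S T : pred (BV N)) d, (forall x y, S x -> T y -> (pcost q x y <= d)%N) ->
  `|corr q S T| <= (2 ^ d.+1 * B)%N%:Z.
Proof.
have Hd : forall d, (2 <= 2 ^ d.+1)%N.
  by move=> d; rewrite expnS; have := expn_gt0 2 d; lia.
elim: q => [h|h|f p0 IH0 p1 IH1|g p0 IH0 p1 IH1] S T d Hc.
- have -> : corr (OutA h) S T = D (fun x => S x && h x) T - D (fun x => S x && ~~ h x) T.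
    rewrite /corr (bigID h) /= /D -sumrN; congr (_ + _); apply: eq_bigr => x /andP [_ hx].
      by apply: eq_bigr => y _; rewrite /agr chiE /= hx; case: Fv.
    rewrite -sumrN; apply: eq_bigr => y _; rewrite /agr chiE /= (negbTE hx); by case: Fv.
  have := HB (fun x => S x && h x) T; have := HB (fun x => S x && ~~ h x) T.
  have := Hd d; rewrite PoszM; nia.
- have -> : corr (OutB h) S T = D S (fun y => T y && h y) - D S (fun y => T y && ~~ h y).
    rewrite /corr /D -sumrB; apply: eq_bigr => x _.
    rewrite (bigID h) /= -sumrN; congr (_ + _); apply: eq_bigr => y /andP [_ hy].
      by rewrite /agr chiE /= hy; case: Fv.
    rewrite /agr chiE /= (negbTE hy); by case: Fv.
  have := HB S (fun y => T y && h y); have := HB S (fun y => T y && ~~ h y).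
  have := Hd d; rewrite PoszM; nia.
- case: d Hc => [|d] Hc.
    rewrite corr0 ?normr0 // => x y Sx Ty; by have := Hc x y Sx Ty.
  have -> : corr (SendA f p0 p1) S T = corr p1 (fun x => S x && f x) T + corr p0 (fun x => S x && ~~ f x) T.
    rewrite /corr (bigID f) /=; congr (_ + _); apply: eq_bigr => x /andP [_ hx];
    apply: eq_bigr => y _; by rewrite /agr /= ?hx ?(negbTE hx).
  have h1 := IH1 (fun x => S x && f x) T d.
  have h0 := IH0 (fun x => S x && ~~ f x) T d.
  have E : (2 ^ d.+2 * B = 2 * (2 ^ d.+1 * B))%N by rewrite expnS; lia.
  rewrite E PoszM.
  have c1 : forall x y, S x && f x -> T y -> (pcost p1 x y <= d)%N.
    by move=> x y /andP [Sx fx] Ty; have := Hc x y Sx Ty; rewrite /= fx.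
  have c0 : forall x y, S x && ~~ f x -> T y -> (pcost p0 x y <= d)%N.
    by move=> x y /andP [Sx fx] Ty; have := Hc x y Sx Ty; rewrite /= (negbTE fx).
  have := h1 c1; have := h0 c0; lia.
- case: d Hc => [|d] Hc.
    rewrite corr0 ?normr0 // => x y Sx Ty; by have := Hc x y Sx Ty.
  have -> : corr (SendB g p0 p1) S T = corr p1 S (fun y => T y && g y) + corr p0 S (fun y => T y && ~~ g y).
    rewrite /corr -big_split; apply: eq_bigr => x _ /=.
    rewrite (bigID g) /=; congr (_ + _); apply: eq_bigr => y /andP [_ hy];
    by rewrite /agr /= ?hy ?(negbTE hy).
  have h1 := IH1 S (fun y => T y && g y) d.
  have h0 := IH0 S (fun y => T y && ~~ g y) d.
  have E : (2 ^ d.+2 * B = 2 * (2 ^ d.+1 * B))%N by rewrite expnS; lia.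
  rewrite E PoszM.
  have c1 : forall x y, S x -> T y && g y -> (pcost p1 x y <= d)%N.
    by move=> x y Sx /andP [Ty gy]; have := Hc x y Sx Ty; rewrite /= gy.
  have c0 : forall x y, S x -> T y && ~~ g y -> (pcost p0 x y <= d)%N.
    by move=> x y Sx /andP [Ty gy]; have := Hc x y Sx Ty; rewrite /= (negbTE gy).
  have := h1 c1; have := h0 c0; lia.
Qed.
End Corr.

Lemma sum_agr N (R : finType) (Q : R -> proto (BV N)) x y :
  \sum_r agr (Q r) x y = #|R|%:Z - 2 * #|[set r | pout (Q r) x y != Fv x y]|%:Z.
Proof.
set W := [set r | _].
rewrite (eq_bigr (fun r => 1 - (if r \in W then 2 else 0))); last first.
  by move=> r _; rewrite /agr inE; case: eqP.
rewrite sumrB -big_mkcond /= !sumr_const; change #|xpredT| with #|R|.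
congr (_ - _); first by rewrite natz.
by rewrite -natz mulr_natr.
Qed.

Lemma rand_lb N k (R : finType) (Q : R -> proto (BV N)) : N = k.*2 -> (0 < #|R|)%N ->
  (forall x y, 3 * #|[set r | pout (Q r) x y != Fv x y]| <= #|R|)%N ->
  exists r x y, (k <= pcost (Q r) x y + 3)%N.
Proof.
move=> hN hR Hc.
case: (boolP [exists r, [exists x, [exists y, k <= pcost (Q r) x y + 3]]])%N.
  by case/existsP => r /existsP [x /existsP [y h]]; exists r, x, y.
move/existsPn => H.
have [r0 _] : {r0 : R | true}.
  by case: (pickP (fun _ : R => true)) => [r0 _|/eq_card0 h]; [exists r0 | rewrite h in hR].
have x0 : BV N := [ffun _ => false].
have H' : forall r x y, (pcost (Q r) x y + 3 < k)%N.
  move=> r x y; move: (H r) => /existsPn /(_ x) /existsPn /(_ y); rewrite -ltnNge; done.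
have hk : (3 < k)%N by have := H' r0 x0 x0; lia.
set d := (k - 4)%N.
set B := (2 ^ (3 * k))%N.
have HB : forall S T : pred (BV N), `|D S T| <= B%:Z.
  move=> S T; have := Dbound S T.
  have -> : (2 ^ N)%N%:Z ^+ 3 = (B ^ 2)%N%:Z.
    have e : ((2 ^ N) ^ 3 = B ^ 2)%N by rewrite /B -!expnM hN; congr (2 ^ _)%N; lia.
    by rewrite -e -!natz !natrX.
  by nia.
have Hcorr : forall r, corr (Q r) predT predT <= (2 ^ d.+1 * B)%N%:Z.
  move=> r; apply: le_trans (ler_norm _) _; apply: corr_bound => // x y _ _.
  by have := H' r x y; lia.
have S1 : \sum_r corr (Q r) predT predT <= #|R|%:Z * (2 ^ d.+1 * B)%N%:Z.
  apply: le_trans (ler_sum _ (fun r _ => Hcorr r)) _.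
  by rewrite sumr_const -mulr_natl natz.
have S2 : #|R|%:Z * ((2 ^ N)%N%:Z * (2 ^ N)%N%:Z) <= 3 * \sum_r corr (Q r) predT predT.
  have E : \sum_r corr (Q r) predT predT = \sum_x \sum_y \sum_r agr (Q r) x y.
    rewrite /corr exchange_big /=; apply: eq_bigr => x _; by rewrite exchange_big.
  rewrite E mulr_sumr.
  apply: le_trans (_ : \sum_(x : BV N) \sum_(y : BV N) (#|R|%:Z) <= _).
    by rewrite sumr_const sumr_const card_BV -mulrnA -mulr_natr natz PoszM.
  apply: ler_sum => x _; rewrite mulr_sumr; apply: ler_sum => y _.
  rewrite sum_agr; have := Hc x y; lia.
have e : (2 ^ N * 2 ^ N = 8 * (2 ^ d.+1 * B))%N.
  rewrite /B -!expnD hN; have -> : 8%N = (2 ^ 3)%N by [].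
  rewrite -!expnD; congr (2 ^ _)%N; lia.
have hR' : 0 < #|R|%:Z by rewrite ltz_nat.
move: S2; rewrite -[X in _ * X <= _]PoszM e PoszM => S2.
set X := (2 ^ d.+1 * B)%N.
have hX : (0 < X)%N by rewrite muln_gt0 !expn_gt0.
have hRX : 0 < #|R|%:Z * X%:Z by rewrite mulr_gt0 // ltz_nat.
move: S1 S2 hRX; set s := \sum_r _; set RR := #|R|%:Z; set XX := X%:Z.
move=> S1 S2 hRX.
have : RR * (8 * XX) = 8 * (RR * XX) by ring.
lia.
Qed.

Local Close Scope ring_scope.

Lemma nocyc n (E : {set {set 'I_n}}) (rk : 'I_n -> nat) :
 (forall u v, [set u; v] \in E -> rk u != rk v) ->
 (forall u1 u2 v, [set u1; v] \in E -> [set u2; v] \in E -> (rk u1 < rk v)%N -> (rk u2 < rk v)%N -> u1 = u2) ->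
 ~ has_cycle E.
Proof.
move=> H1 H2 [c [hs hu hc]].
case: c hs hu hc => [//|w0 c'] hs hu hc.
set c := w0 :: c' in hs hu hc.
have w0c : w0 \in c by rewrite inE eqxx.
case: (arg_maxnP rk w0c) => v vc vmax.
case: (rot_to vc) => k s hrot.
have hu' : uniq (v :: s) by rewrite -hrot rot_uniq.
have hc' : cycle (fun u v => [set u; v] \in E) (v :: s) by rewrite -hrot rot_cycle.
have hs' : size (v :: s) = size c by rewrite -hrot size_rot.
have memc : forall u, u \in v :: s -> u \in c by move=> u; rewrite -hrot mem_rot.
case: s hrot hu' hc' hs' memc => [|y [|a t]] hrot hu' hc' hs' memc.
- by rewrite -hs' in hs.
- by rewrite -hs' in hs.
set z := last a t.
have zt : z \in a :: t by apply: mem_last.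
move: hc'; rewrite /= rcons_path => /and3P [evy _ /andP [_ ezv]].
have hy : y \in c by apply: memc; rewrite !inE eqxx orbT.
have hz : z \in c by apply: memc; rewrite in_cons in_cons zt !orbT.
have eyv : [set y; v] \in E by rewrite setUC.
have ry : (rk y < rk v)%N.
  by have := vmax y hy; have := H1 _ _ eyv; rewrite /= => ne le; rewrite ltn_neqAle ne le.
have rz : (rk z < rk v)%N.
  by have := vmax z hz; have := H1 _ _ ezv; rewrite /= => ne le; rewrite ltn_neqAle ne le.
have yz := H2 _ _ _ eyv ezv ry rz.
move: hu'; rewrite /= => /and3P [_ yn _].
by move/negP: yn; apply; rewrite yz.
Qed.

Section Graph.
Variables (n' N : nat).
Local Notation V := 'I_n'.+1.
Hypothesis HnN : (4 * N + 1 <= n')%N.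
Hypothesis HN : (0 < N)%N.

Definition bit (x : BV N) (i : nat) : bool :=
  if @insub nat (fun k => k < N) 'I_N i is Some j then x j else false.

Lemma bitE x (j : 'I_N) : bit x j = x j.
Proof. by rewrite /bit valK. Qed.

Lemma bit_out x i : (N <= i)%N -> bit x i = false.
Proof. by move=> h; rewrite /bit insubF // ltnNge h. Qed.

Definition vtx (u : nat) : V := inord u.
Definition E2 (u v : nat) : {set V} := [set vtx u; vtx v].

Lemma vtxK u : (u <= n')%N -> (vtx u : nat) = u.
Proof. by move=> h; rewrite /vtx inordK. Qed.

Lemma vtx_eq u v : (u <= n')%N -> (v <= n')%N -> (vtx u == vtx v) = (u == v).
Proof. by move=> hu hv; rewrite -val_eqE /= !vtxK. Qed.

Lemma in_E2 z a b : (z <= n')%N -> (a <= n')%N -> (b <= n')%N ->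
  (vtx z \in E2 a b) = (z == a) || (z == b).
Proof. by move=> hz ha hb; rewrite !inE !vtx_eq. Qed.

Lemma E2eq a b c d : (a <= n')%N -> (b <= n')%N -> (c <= n')%N -> (d <= n')%N ->
  E2 a b = E2 c d ->
  [/\ (a == c) || (a == d), (b == c) || (b == d), (c == a) || (c == b) & (d == a) || (d == b)].
Proof.
move=> ha hb hc hd e.
have h1 : vtx a \in E2 a b by rewrite !inE eqxx.
have h2 : vtx b \in E2 a b by rewrite !inE eqxx orbT.
have h3 : vtx c \in E2 c d by rewrite !inE eqxx.
have h4 : vtx d \in E2 c d by rewrite !inE eqxx orbT.
rewrite e in h1 h2; rewrite -e in h3 h4.
by rewrite !in_E2 // in h1 h2 h3 h4.
Qed.

Lemma E2eq' a b c d : E2 a b = E2 c d -> (a <= n')%N -> (b <= n')%N -> (c <= n')%N -> (d <= n')%N ->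
  [/\ (a == c) || (a == d), (b == c) || (b == d), (c == a) || (c == b) & (d == a) || (d == b)].
Proof. by move=> e ha hb hc hd; apply: E2eq. Qed.

Ltac e2 H := let K := fresh in
  have K := E2eq' H ltac:(lia) ltac:(lia) ltac:(lia) ltac:(lia);
  case: K => /orP [] /eqP ? /orP [] /eqP ? /orP [] /eqP ? /orP [] /eqP ?; lia.

Lemma card_E2 a b : (a <= n')%N -> (b <= n')%N -> a != b -> #|E2 a b| = 2.
Proof. by move=> ha hb ne; rewrite cards2 vtx_eq // ne. Qed.

Definition eA (x : BV N) (o : option ('I_N * bool)) : {set V} :=
  match o with
  | Some (i, s) => if x i then E2 (4 * i + s) (4 * i + 2 + s) else E2 (4 * i + s) (4 * i + 4 + s)
  | None => E2 0 (4 * N)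
  end.
Definition eB (y : BV N) (p : 'I_N * bool) : {set V} :=
  E2 (4 * p.1 + 2 + p.2) (4 * p.1 + 4 + (p.2 (+) y p.1)).

Definition encA x : {set {set V}} := [set eA x o | o : option ('I_N * bool)].
Definition encB y : {set {set V}} := [set eB y p | p : 'I_N * bool].

Lemma valid m x y : (4 * N + 1 <= m)%N -> valid_input n'.+1 m (encA x) (encB y).
Proof.
move=> hm; split.
- move=> e /imsetP [[[i s]|] _ ->] /=.
    have hi := ltn_ord i.
    by case: (x i); apply: card_E2; case: s => /=; lia.
  by apply: card_E2; lia.
- move=> e /imsetP [[i s] _ ->] /=.
  have hi := ltn_ord i.
  by apply: card_E2; case: s; case: (y i) => /=; lia.
- rewrite disjoint_subset; apply/subsetP => e /imsetP [o _ ->]; rewrite !inE.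
  apply/negP => /imsetP [[i s] _].
  have hi := ltn_ord i.
  case: o => [[j t]|] /=.
    have hj := ltn_ord j.
    rewrite /eB /=; case: (x j); case: s; case: t; case: (y i) => /= H; e2 H.
  rewrite /eB /=; case: s; case: (y i) => /= H; e2 H.
- rewrite cardsU.
  have h1 : (#|encA x| <= #|{: option ('I_N * bool)}|)%N by apply: leq_imset_card.
  have h2 : (#|encB y| <= #|{: 'I_N * bool}|)%N by apply: leq_imset_card.
  rewrite card_option card_prod card_ord card_bool in h1.
  rewrite card_prod card_ord card_bool in h2.
  lia.
Qed.

Section XY.
Variables (x y : BV N).

Definition sig i := odd (\sum_(0 <= j < i) (bit x j && bit y j)).
Lemma sig0 : sig 0 = false.
Proof. by rewrite /sig big_geq. Qed.
Lemma sigS i : sig i.+1 = sig i (+) (bit x i && bit y i).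
Proof. by rewrite /sig big_nat_recr //= oddD oddb. Qed.
Lemma sigN : sig N = odd (ip x y).
Proof.
rewrite /sig /ip big_mkord; congr odd; apply: eq_bigr => j _; by rewrite !bitE.
Qed.

Definition EE := encA x :|: encB y.
Definition Rn u v := E2 u v \in EE.
Lemma RA o : eA x o \in EE.
Proof. by rewrite /EE inE; apply/orP; left; apply: imset_f. Qed.
Lemma RB p : eB y p \in EE.
Proof. by rewrite /EE inE; apply/orP; right; apply: imset_f. Qed.
Lemma E2C u v : E2 u v = E2 v u.
Proof. by rewrite /E2 setUC. Qed.

Fixpoint qs i : seq nat :=
  if i is i'.+1 then
    qs i' ++ (if bit x i' then [:: 4 * i' + 2 + sig i'] else [::]) ++ [:: 4 * i'.+1 + sig i'.+1]
  else [::].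

Definition Rlt u v := Rn u v && (u < v)%N.

Lemma qs_inv i : (i <= N)%N ->
  [/\ path Rlt 0 (qs i), last 0 (qs i) = 4 * i + sig i,
      all (fun v => v <= 4 * i + 1)%N (qs i) & (i <= size (qs i))%N].
Proof.
elim: i => [|i IH] hi; first by rewrite /= sig0.
have hi' : (i < N)%N by [].
have [P L A S] := IH (ltnW hi).
set j := Ordinal hi'.
have bj : bit x i = x j by rewrite -bitE.
have byj : bit y i = y j by rewrite -bitE.
have e4 : forall b : bool, (4 * i.+1 + b = 4 * i + 4 + b)%N by move=> b; lia.
split.
- rewrite /= cat_path P L /=.
  case hx : (bit x i) => /=.
  + rewrite !andbT; apply/andP; split; apply/andP; split.
    * have := RA (Some (j, sig i)); by rewrite /= -bj hx.
    * by case: (sig i) => /=; lia.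
    * have := RB (j, sig i); rewrite /eB /= sigS hx -byj e4 /=; by [].
    * by rewrite sigS hx /=; case: (sig i); case: (bit y i) => /=; lia.
  + rewrite andbT; apply/andP; split.
    * have := RA (Some (j, sig i)); by rewrite /= -bj hx sigS hx /= addbF e4.
    * by rewrite sigS hx /= addbF; case: (sig i) => /=; lia.
- by rewrite /= !last_cat.
- rewrite /= !all_cat; apply/and3P; split.
  + apply: sub_all A => v /=; lia.
  + by case: (bit x i) => //=; rewrite andbT; case: (sig i) => /=; lia.
  + by rewrite /= andbT; case: (sig i.+1) => /=; lia.
- by rewrite /= !size_cat /=; lia.
Qed.

Lemma cyc : (2 <= N)%N -> ~~ odd (ip x y) -> has_cycle EE.
Proof.
move=> h2 hodd.
have [P L A S] := qs_inv (leqnn N).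
have sN : sig N = false by rewrite sigN (negbTE hodd).
have Hle : forall u, u \in 0 :: qs N -> (u <= n')%N.
  move=> u; rewrite inE => /orP [/eqP -> //|hu].
  by move/allP: A => /(_ u hu); lia.
exists (map vtx (0 :: qs N)); split.
- rewrite size_map /=; lia.
- rewrite map_inj_in_uniq.
  + have pl : path ltn 0 (qs N) by apply: sub_path P => u v /andP [].
    exact: (@sorted_uniq _ ltn ltn_trans ltnn (0 :: qs N) pl).
  + move=> u v hu hv e; have := congr1 (@nat_of_ord _) e; by rewrite !vtxK ?(Hle u hu) ?(Hle v hv).
- rewrite /= -map_rcons path_map rcons_path; apply/andP; split.
    by apply: sub_path P => u v /andP [].
  by rewrite /= L sN addn0 /relpre; have := RA None; rewrite /= E2C.
Qed.

Definition edgeNat (lo hi : nat) : Prop :=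
  (exists i (s : bool), [/\ (i < N)%N, bit x i = true, lo = 4 * i + s & hi = 4 * i + 2 + s]) \/
  (exists i (s : bool), [/\ (i < N)%N, bit x i = false, lo = 4 * i + s & hi = 4 * i.+1 + s]) \/
  (lo = 4 * N + 0 /\ hi = 4 * 0 + 0) \/
  (exists i (s t b : bool), [/\ (i < N)%N, bit x i = true, b = bit y i, t = s (+) b &
      lo = 4 * i + 2 + s /\ hi = 4 * i.+1 + t]) \/
  (exists i (s t b : bool), [/\ (i < N)%N, bit x i = false, b = bit y i, t = s (+) b &
      lo = 4 * i.+1 + t /\ hi = 4 * i + 2 + s]).

Lemma edgeNat_bound lo hi : edgeNat lo hi -> (lo <= 4 * N + 1)%N /\ (hi <= 4 * N + 1)%N.
Proof.
case=> [H|[H|[H|[H|H]]]].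
- case: H => i [s [? ? -> ->]]; case: s => /=; lia.
- case: H => i [s [? ? -> ->]]; case: s => /=; lia.
- case: H => -> ->; lia.
- case: H => i [s [t [b [? ? _ _ [-> ->]]]]]; case: s; case: t => /=; lia.
- case: H => i [s [t [b [? ? _ _ [-> ->]]]]]; case: s; case: t => /=; lia.
Qed.

Lemma edges e : e \in EE -> exists lo hi, edgeNat lo hi /\ e = E2 lo hi.
Proof.
rewrite /EE inE => /orP [] /imsetP [o _ ->].
- case: o => [[i s]|] /=.
    have hi := ltn_ord i.
    case hx : (x i).
      exists (4 * i + s), (4 * i + 2 + s); split => //.
      by left; exists i, s; split => //; rewrite bitE.
    exists (4 * i + s), (4 * i.+1 + s); split.
      by right; left; exists i, s; split => //; rewrite bitE.
    by congr E2; lia.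
  exists (4 * N + 0), (4 * 0 + 0); split; first by do 2 right; left.
  by rewrite addn0 muln0 E2C.
- case: o => i s; rewrite /eB /=.
  have hi := ltn_ord i.
  case hx : (x i).
    exists (4 * i + 2 + s), (4 * i.+1 + (s (+) y i)); split.
      do 3 right; left; exists i, s, (s (+) y i), (y i); split => //; by rewrite bitE.
    by congr E2; lia.
  exists (4 * i.+1 + (s (+) y i)), (4 * i + 2 + s); split.
    do 4 right; exists i, s, (s (+) y i), (y i); split => //; by rewrite bitE.
  by rewrite E2C; congr E2; lia.
Qed.

Definition rk2 (i r : nat) : nat :=
  if (1 < r)%N && ~~ bit x i then 100 * N + (4 * i + r)
  else 2 * i + (1 < r)%N + (if sig i (+) odd r then 0 else 2 * N + 1).
Definition rank (v : nat) : nat := rk2 (v %/ 4) (v %% 4).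

Lemma rankE i r : (r < 4)%N -> rank (4 * i + r) = rk2 i r.
Proof.
move=> hr; rewrite /rank.
have -> : ((4 * i + r) %/ 4 = i)%N by lia.
have -> : ((4 * i + r) %% 4 = r)%N by lia.
by [].
Qed.

Lemma orient lo hi : sig N = true -> edgeNat lo hi -> (rank lo < rank hi)%N.
Proof.
move=> sN.
case=> [H|[H|[H|[H|H]]]].
- case: H => i [s [hiN bx -> ->]]; rewrite -addnA !rankE; try (case: s; done).
  rewrite /rk2 bx /=; case: s; case: (sig i) => /=; lia.
- case: H => i [s [hiN bx -> ->]]; rewrite !rankE; try (case: s; done).
  rewrite /rk2 sigS bx /= addbF; case: s; case: (sig i) => /=; lia.
- case: H => -> ->; rewrite !rankE //.
  rewrite /rk2 /= sN sig0 /=; lia.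
- case: H => i [s [t [b [hiN bx -> -> [-> ->]]]]]; rewrite -addnA !rankE; try (case: s; case: (bit y i); done).
  rewrite /rk2 sigS bx /=; case: s; case: (bit y i); case: (sig i) => /=; lia.
- case: H => i [s [t [b [hiN bx -> -> [-> ->]]]]]; rewrite -addnA !rankE; try (case: s; case: (bit y i); done).
  rewrite /rk2 bx /=; case: s; case: (bit y i); case: (sig i); case: (sig i.+1) => /=; lia.
Qed.

Definition loOf (h : nat) : nat :=
  let i := h %/ 4 in let r := h %% 4 in
  if (1 < r)%N then (if bit x i then 4 * i + (r - 2) else 4 * i.+1 + ((r - 2 == 1)%N (+) bit y i))
  else if i is i'.+1 then (if bit x i' then 4 * i' + 2 + ((r == 1)%N (+) bit y i') else 4 * i' + r)
  else 4 * N.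

Lemma loOfE (i r : nat) : (r < 4)%N -> loOf (4 * i + r) =
  if (1 < r)%N then (if bit x i then 4 * i + (r - 2) else 4 * i.+1 + ((r - 2 == 1)%N (+) bit y i))
  else if i is i'.+1 then (if bit x i' then 4 * i' + 2 + ((r == 1)%N (+) bit y i') else 4 * i' + r)
  else 4 * N.
Proof.
move=> hr; rewrite /loOf.
have -> : ((4 * i + r) %/ 4 = i)%N by lia.
have -> : ((4 * i + r) %% 4 = r)%N by lia.
by [].
Qed.

Lemma lo_uniq lo hi : edgeNat lo hi -> lo = loOf hi.
Proof.
case=> [H|[H|[H|[H|H]]]].
- case: H => i [s [hiN bx -> ->]]; rewrite -addnA loOfE; last by case: s.
  by rewrite bx; case: s.
- case: H => i [s [hiN bx -> ->]]; rewrite loOfE; last by case: s.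
  by rewrite bx; case: s.
- by case: H => -> ->; rewrite loOfE // addn0.
- case: H => i [s [t [b [hiN bx -> -> [-> ->]]]]]; rewrite loOfE; last by case: s; case: (bit y i).
  by rewrite bx; case: s; case: (bit y i).
- case: H => i [s [t [b [hiN bx -> -> [-> ->]]]]]; rewrite -addnA loOfE; last by case: s.
  by rewrite bx; case: s.
Qed.

Lemma pair_cases (a b l h : nat) :
  [/\ (a == l) || (a == h), (b == l) || (b == h), (l == a) || (l == b) & (h == a) || (h == b)] ->
  l <> h -> (a = l /\ b = h) \/ (a = h /\ b = l).
Proof.
by case=> /orP [] /eqP ? /orP [] /eqP ? /orP [] /eqP ? /orP [] /eqP ?; lia.
Qed.

Lemma E2_val (u v : V) : E2 u v = [set u; v].
Proof. by rewrite /E2 /vtx !inord_val. Qed.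

Lemma edge_pair (u v : V) : [set u; v] \in EE -> sig N = true ->
  exists lo hi, [/\ edgeNat lo hi, (rank lo < rank hi)%N &
    ((u : nat) = lo /\ (v : nat) = hi) \/ ((u : nat) = hi /\ (v : nat) = lo)].
Proof.
move=> /edges [lo [hi [E e]]] sN.
have [bl bh] := edgeNat_bound E.
have ol := orient sN E.
exists lo, hi; split => //.
apply: pair_cases; last by move=> ee; rewrite ee in ol; rewrite ltnn in ol.
apply: E2eq; rewrite ?E2_val //; try lia.
- by have := ltn_ord u.
- by have := ltn_ord v.
Qed.

Lemma acyc : odd (ip x y) -> ~ has_cycle EE.
Proof.
move=> hodd; have sN : sig N = true by rewrite sigN.
apply: (@nocyc _ EE (fun v : V => rank v)).
- move=> u v /edge_pair /(_ sN) [lo [hi [_ ol [[-> ->]|[-> ->]]]]].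
    by rewrite neq_ltn ol.
  by rewrite neq_ltn ol orbT.
- move=> u1 u2 v /edge_pair /(_ sN) [l1 [h1 [E1 o1 [[a1 b1]|[a1 b1]]]]];
  move=> /edge_pair /(_ sN) [l2 [h2 [E2' o2 [[a2 b2]|[a2 b2]]]]] r1 r2;
  subst l1 h1 l2 h2; try lia.
  by apply: val_inj => /=; rewrite (lo_uniq E1) (lo_uniq E2').
Qed.

End XY.
End Graph.


Fixpoint pcomp (X Y : Type) (p : proto X) (fa fb : Y -> X) : proto Y :=
  match p with
  | OutA h => OutA (fun a => h (fa a))
  | OutB h => OutB (fun b => h (fb b))
  | SendA f p0 p1 => SendA (fun a => f (fa a)) (pcomp p0 fa fb) (pcomp p1 fa fb)
  | SendB g p0 p1 => SendB (fun b => g (fb b)) (pcomp p0 fa fb) (pcomp p1 fa fb)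
  end.

Lemma pout_comp X Y (p : proto X) (fa fb : Y -> X) a b :
  pout (pcomp p fa fb) a b = pout p (fa a) (fb b).
Proof. by elim: p => //= f p0 IH0 p1 IH1; rewrite IH0 IH1. Qed.

Lemma pcost_comp X Y (p : proto X) (fa fb : Y -> X) a b :
  pcost (pcomp p fa fb) a b = pcost p (fa a) (fb b).
Proof. by elim: p => //= f p0 IH0 p1 IH1; rewrite IH0 IH1. Qed.

Theorem corollary6p2 :
  exists c N0 : nat, 0 < c /\
    forall (n m : nat) (R : finType) (P : R -> proto {set {set 'I_n}}),
      0 < #|R| -> cycle_correct n m P -> N0 <= minn m n ->
      exists EA EB (r : R),
        valid_input n m EA EB /\ minn m n <= c * pcost (P r) EA EB.
Proof.
exists 100, 50; split => // n m R P hR Hc hL.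
case: n P Hc hL => [|n'] P Hc hL; first by rewrite minn0 in hL.
have hLm : minn m n'.+1 <= m by rewrite geq_minl.
have hLn : minn m n'.+1 <= n'.+1 by rewrite geq_minr.
set L := minn m n'.+1 in hL hLm hLn *.
set k := (L - 2) %/ 8.
have hk8 : 8 * k <= L - 2 by rewrite /k; lia.
have hk8' : L - 2 < 8 * k + 8 by rewrite /k; lia.
set N := k.*2.
have HnN : 4 * N + 1 <= n' by rewrite /N; lia.
have HmN : 4 * N + 1 <= m by rewrite /N; lia.
have HN : 0 < N by rewrite /N; lia.
have HN2 : 1 < N by rewrite /N; lia.
set Q := fun r => pcomp (P r) (@encA n' N) (@encB n' N).
have [r [x [y hc]]] : exists r x y, k <= pcost (Q r) x y + 3.
  apply: (@rand_lb N k R Q erefl hR) => x y.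
  have [H1 H2] := Hc _ _ (valid HnN HN x y HmN).
  case ho : (odd (ip x y)).
    have -> : [set r | pout (Q r) x y != Fv x y] = [set r | pout (P r) (encA n' x) (encB n' y)].
      by apply/setP => r; rewrite !inE pout_comp /Fv ho; case: pout.
    by apply: H2; apply: (acyc HnN HN); rewrite ho.
  have -> : [set r | pout (Q r) x y != Fv x y] = [set r | ~~ pout (P r) (encA n' x) (encB n' y)].
    by apply/setP => r; rewrite !inE pout_comp /Fv ho; case: pout.
  by apply: H1; apply: (cyc HnN HN HN2); rewrite ho.
exists (encA n' x), (encB n' y), r; split; first exact: valid.
rewrite /Q pcost_comp in hc.
lia.
Qed.
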